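(* Let $(\mathcal{A},\mathcal{E})$ be a finite, essentially small exact category and let $X,Y$ be indecomposable objects with $\mu_\mathcal{E}(X)\lll\mu_\mathcal{E}(Y)$ and $\mu_\mathcal{E}(X)\ne\mu_\mathcal{E}(Y)$. Then there exist indecomposable objects $Y'\subsetneq_\mathcal{E}Y''\subset_\mathcal{E}Y$ such that $Y'$ is an $\mathcal{E}$-Gabriel–Roiter predecessor of $Y''$, $\mu_\mathcal{E}(Y')\lll\mu_\mathcal{E}(X)$, $\mu_\mathcal{E}(X)\lll\mu_\mathcal{E}(Y'')$ with $\mu_\mathcal{E}(X)\ne\mu_\mathcal{E}(Y'')$, and $l_\mathcal{E}(Y')\le l_\mathcal{E}(X)$.
   Context: $(\mathcal{A},\mathcal{E})$ is a Quillen exact category; admissible monics are morphisms $i$ with $(i,d)\in\mathcal{E}$ for some $d$. $X\subset_\mathcal{E}Y$ means there is an admissible monic $X\to Y$; $X\subsetneq_\mathcal{E}Y$ means there is one that is not an isomorphism. The $\mathcal{E}$-length $l_\mathcal{E}(X)$ is the supremum of all $n$ such that there is a chain $0=X_0\to\cdots\to X_n=X$ of admissible monics none of which is an isomorphism; $(\mathcal{A},\mathcal{E})$ is finite if $l_\mathcal{E}(X)<\infty$ for all $X$. $\mathfrak{S}(\mathbb{N})$ is the set of finite nonempty sequences of natural numbers, totally ordered by: $x\lll y$ iff $x=y$, or $x$ is a proper prefix of $y$, or at the first index $i$ where $x_i\neq y_i$ (both defined) one has $x_i>y_i$. For indecomposable $X$, $\mu_\mathcal{E}(X)$ is the $\lll$-maximum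 of $(l_\mathcal{E}(X_1),\dots,l_\mathcal{E}(X_n))$ over all chains $X_1\subsetneq_\mathcal{E}\cdots\subsetneq_\mathcal{E}X_n=X$ ($n\ge1$) with all $X_i$ indecomposable. For indecomposables $X,Y$, $X$ is an $\mathcal{E}$-Gabriel–Roiter predecessor of $Y$ if $X\subsetneq_\mathcal{E}Y$ and $\mu_\mathcal{E}(X)=\max\{\mu_\mathcal{E}(Y') : Y'\text{ indecomposable},\ Y'\subsetneq_\mathcal{E}Y\}$. *)

(* Defs.v *)
From HB Require Import structures.
From mathcomp Require Import all_boot all_order all_algebra.
From Stdlib Require Import ClassicalEpsilon.
Set Implicit Arguments. Unset Strict Implicit. Unset Printing Implicit Defensive.
Import GRing.Theory.

Record preadditive := PreAdditive {
  obj :> Type;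
  hom : obj -> obj -> zmodType;
  idm : forall A, hom A A;
  comp : forall A B C, hom B C -> hom A B -> hom A C;
  compA : forall A B C D (h : hom C D) (g : hom B C) (f : hom A B),
      comp h (comp g f) = comp (comp h g) f;
  comp1m : forall A B (f : hom A B), comp (idm B) f = f;
  compm1 : forall A B (f : hom A B), comp f (idm A) = f;
  compDl : forall A B C (g1 g2 : hom B C) (f : hom A B),
      comp (g1 + g2)%R f = (comp g1 f + comp g2 f)%R;
  compDr : forall A B C (g : hom B C) (f1 f2 : hom A B),
      comp g (f1 + f2)%R = (comp g f1 + comp g f2)%R
}.
Arguments hom {p}.
Arguments idm {p}.
Arguments comp {p A B C}.

Section Basic.
Variable C : preadditive.

Definition is_zero (Z : C) : Prop :=
  forall Y : C, (forall f : hom Z Y, f = 0%R) /\ (forall g : hom Y Z, g = 0%R).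

Definition is_biproduct (X A B : C) : Prop :=
  exists (i1 : hom A X) (i2 : hom B X) (p1 : hom X A) (p2 : hom X B),
    [/\ comp p1 i1 = idm A, comp p2 i2 = idm B, comp p1 i2 = 0%R,
        comp p2 i1 = 0%R & (comp i1 p1 + comp i2 p2)%R = idm X].

Definition is_additive : Prop :=
  (exists Z : C, is_zero Z) /\ (forall A B : C, exists X : C, is_biproduct X A B).

Definition indecomposable (X : C) : Prop :=
  ~ is_zero X /\ forall A B : C, is_biproduct X A B -> is_zero A \/ is_zero B.

Definition is_iso (A B : C) (f : hom A B) : Prop :=
  exists g : hom B A, comp g f = idm A /\ comp f g = idm B.

Definition is_kernel (A B D : C) (i : hom A B) (d : hom B D) : Prop :=
  comp d i = 0%R /\
  forall (W : C) (f : hom W B), comp d f = 0%R -> exists! g : hom W A, comp i g = f.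

Definition is_cokernel (A B D : C) (i : hom A B) (d : hom B D) : Prop :=
  comp d i = 0%R /\
  forall (W : C) (f : hom B W), comp f i = 0%R -> exists! g : hom D W, comp g d = f.

Definition kc_pair (A B D : C) (i : hom A B) (d : hom B D) : Prop :=
  is_kernel i d /\ is_cokernel i d.

Definition is_pushout (A B A' B' : C) (i : hom A B) (f : hom A A')
    (i' : hom A' B') (f' : hom B B') : Prop :=
  comp i' f = comp f' i /\
  forall (W : C) (u : hom A' W) (v : hom B W), comp u f = comp v i ->
    exists! h : hom B' W, comp h i' = u /\ comp h f' = v.

Definition is_pullback (B D D' B' : C) (d : hom B D) (f : hom D' D)
    (d' : hom B' D') (f' : hom B' B) : Prop :=
  comp d f' = comp f d' /\
  forall (W : C) (u : hom W D') (v : hom W B), comp f u = comp d v ->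
    exists! h : hom W B', comp d' h = u /\ comp f' h = v.

Definition conflation_class := forall A B D : C, hom A B -> hom B D -> Prop.

Definition adm_monic (E : conflation_class) (A B : C) (i : hom A B) : Prop :=
  exists (D : C) (d : hom B D), E A B D i d.
Definition adm_epic (E : conflation_class) (B D : C) (d : hom B D) : Prop :=
  exists (A : C) (i : hom A B), E A B D i d.

(* Quillen's axioms, in the form of Buehler, "Exact categories", Def. 2.1 *)
Definition is_exact_structure (E : conflation_class) : Prop :=
  (forall A B D A' B' D' (i : hom A B) (d : hom B D) (i' : hom A' B') (d' : hom B' D')
          (a : hom A A') (b : hom B B') (c : hom D D'),
      E A B D i d -> is_iso a -> is_iso b -> is_iso c ->
      comp i' a = comp b i -> comp d' b = comp c d -> E A' B' D' i' d') /\
  (forall A B D (i : hom A B) (d : hom B D), E A B D i d -> kc_pair i d) /\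
  (forall A : C, adm_monic E (idm A)) /\ (forall A : C, adm_epic E (idm A)) /\
  (forall A B D (f : hom A B) (g : hom B D),
      adm_monic E f -> adm_monic E g -> adm_monic E (comp g f)) /\
  (forall A B D (f : hom A B) (g : hom B D),
      adm_epic E f -> adm_epic E g -> adm_epic E (comp g f)) /\
  (forall A B A' (i : hom A B) (f : hom A A'), adm_monic E i ->
      exists (B' : C) (i' : hom A' B') (f' : hom B B'),
        is_pushout i f i' f' /\ adm_monic E i') /\
  (forall B D D' (d : hom B D) (f : hom D' D), adm_epic E d ->
      exists (B' : C) (d' : hom B' D') (f' : hom B' B),
        is_pullback d f d' f' /\ adm_epic E d').

End Basic.

Record exact_category := ExactCategory {
  ecat :> preadditive;
  conflation : conflation_class ecat;
  ecat_additive : is_additive ecat;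
  ecat_exact : is_exact_structure conflation
}.

Section ExactNotions.
Variable EC : exact_category.

Definition subE (X Y : EC) : Prop :=
  exists i : hom X Y, adm_monic (@conflation EC) i.
Definition psubE (X Y : EC) : Prop :=
  exists i : hom X Y, adm_monic (@conflation EC) i /\ ~ is_iso i.

Inductive zchain : nat -> EC -> Prop :=
  | zchain0 (X : EC) : is_zero X -> zchain 0 X
  | zchainS (n : nat) (X' X : EC) : zchain n X' -> psubE X' X -> zchain n.+1 X.

Definition finite_exact : Prop :=
  forall X : EC, exists N : nat, forall n, zchain n X -> (n <= N)%N.

(* the E-length (the supremum, which is a maximum when finite) *)
Definition lE (X : EC) : nat :=
  epsilon (inhabits 0%N)
    (fun n => zchain n X /\ forall m, zchain m X -> (m <= n)%N).

Definition lll (x y : seq nat) : Prop :=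
  x = y \/ (prefix x y /\ x <> y) \/
  exists i : nat, [/\ (i < size x)%N, (i < size y)%N, take i x = take i y &
                      (nth 0%N y i < nth 0%N x i)%N].

Inductive grchain : seq nat -> EC -> Prop :=
  | grchain1 (X : EC) : indecomposable X -> grchain [:: lE X] X
  | grchainS (s : seq nat) (X' X : EC) :
      grchain s X' -> indecomposable X -> psubE X' X -> grchain (rcons s (lE X)) X.

Definition muE (X : EC) : seq nat :=
  epsilon (inhabits [::])
    (fun s => grchain s X /\ forall t, grchain t X -> lll t s).

Definition GR_predecessor (X Y : EC) : Prop :=
  psubE X Y /\
  forall Y' : EC, indecomposable Y' -> psubE Y' Y -> lll (muE Y') (muE X).

End ExactNotions.

(* Main.v *)
Require Import Defs.
From HB Require Import structures.
From mathcomp Require Import all_boot all_order all_algebra.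
From mathcomp Require Import zify.
From Stdlib Require Import Classical ClassicalEpsilon.
Import Defs.
Set Implicit Arguments. Unset Strict Implicit. Unset Printing Implicit Defensive.
Import GRing.Theory.

Section Pre.
Variable C : preadditive.
Local Open Scope ring_scope.

Lemma comp0r (A B D : C) (g : hom B D) : comp g (0 : hom A B) = 0.
Proof.
have H := compDr g (0 : hom A B) 0; rewrite addr0 in H.
by move/(congr1 (fun x => x - comp g 0)): H; rewrite addrK subrr.
Qed.

Lemma comp0l (A B D : C) (f : hom A B) : comp (0 : hom B D) f = 0.
Proof.
have H := compDl (0 : hom B D) 0 f; rewrite addr0 in H.
by move/(congr1 (fun x => x - comp 0 f)): H; rewrite addrK subrr.
Qed.

Lemma zero_idm (Z : C) : is_zero Z -> idm Z = 0.
Proof. by move=> /(_ Z) [H _]; apply: H. Qed.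

Lemma idm_zero (Z : C) : idm Z = 0 -> is_zero Z.
Proof.
move=> H Y; split=> f.
  by rewrite -(compm1 f) H comp0r.
by rewrite -(comp1m f) H comp0l.
Qed.

Lemma zero_iso (A B : C) (f : hom A B) : is_zero A -> is_zero B -> is_iso f.
Proof.
move=> zA zB; exists 0; split.
  by rewrite ((zA A).1 (comp _ _)) ((zA A).1 (idm A)).
by rewrite ((zB B).1 (comp _ _)) ((zB B).1 (idm B)).
Qed.

Lemma kernel_mono (A B D : C) (i : hom A B) (d : hom B D) : is_kernel i d ->
  forall W (g1 g2 : hom W A), comp i g1 = comp i g2 -> g1 = g2.
Proof.
move=> [H0 H] W g1 g2 E.
have H1 : comp d (comp i g1) = 0 by rewrite compA H0 comp0l.
have [g [_ U]] := H W _ H1.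
by rewrite -(U g1) // (U g2).
Qed.

Lemma mono_iso_right (A B D : C) (f : hom A B) (g : hom B D) :
  (forall W (g1 g2 : hom W B), comp g g1 = comp g g2 -> g1 = g2) ->
  is_iso (comp g f) -> is_iso g.
Proof.
move=> M [h [H1 H2]]; exists (comp f h); split; last by rewrite compA.
by apply: M; rewrite compm1 compA (compA g f h) H2 comp1m.
Qed.

End Pre.


Fixpoint lleb (x y : seq nat) : bool :=
  match x, y with
  | [::], _ => true
  | _ :: _, [::] => false
  | a :: x', b :: y' => (b < a) || ((a == b) && lleb x' y')
  end.

Lemma lll_nil y : lll [::] y.
Proof. case: y => [|b y]; first by left. by right; left; split. Qed.

Lemma lll_cons_nil a x : ~ lll (a :: x) [::].
Proof. by case=> [//|[[]//|[i []]]]. Qed.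

Lemma lll_cons a x b y : lll (a :: x) (b :: y) <-> (b < a \/ (a = b /\ lll x y)).
Proof.
split.
- case=> [[-> ->]|[[/= /andP[/eqP -> Hp] Hne]|[[|i] [/= Hi1 Hi2 Ht Hn]]]].
  + by right; split=> //; left.
  + by right; split=> //; right; left; split=> // E; apply: Hne; rewrite E.
  + by left.
  + case: Ht => -> Ht; right; split=> //; right; right; exists i; split=> //.
- case=> [H|[-> [->|[[Hp Hne]|[i [Hi1 Hi2 Ht Hn]]]]]].
  + by right; right; exists 0.
  + by left.
  + right; left; split; first by rewrite /= eqxx Hp.
    by case=> E; apply: Hne.
  + by right; right; exists i.+1; split=> //=; rewrite Ht.
Qed.

Lemma lllP x y : lll x y <-> lleb x y.
Proof.
elim: x y => [|a x IH] [|b y] /=.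
- by split=> // _; left.
- by split=> // _; apply: lll_nil.
- by split=> // /lll_cons_nil.
- rewrite lll_cons IH; split.
  + by case=> [->//|[-> ->]]; rewrite eqxx orbT.
  + by case/orP=> [->|/andP[/eqP -> ->]]; [left|right].
Qed.

Lemma lleb_refl x : lleb x x.
Proof. by elim: x => //= a x ->; rewrite eqxx orbT. Qed.

Lemma lleb_total x y : lleb x y || lleb y x.
Proof.
elim: x y => [|a x IH] [|b y] //=.
by have [H|H|H] := ltngtP a b; rewrite //= IH.
Qed.

Lemma lleb_trans y x z : lleb x y -> lleb y z -> lleb x z.
Proof.
elim: y x z => [|b y IH] [|a x] [|c z] //=.
case/orP=> [H1|/andP[/eqP E1 H1]]; case/orP=> [H2|/andP[/eqP E2 H2]].
- by rewrite (ltn_trans H2 H1).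
- by rewrite -E2 H1.
- by rewrite E1 H2.
- by rewrite E1 -E2 eqxx (IH _ _ H1 H2) orbT.
Qed.

Lemma lleb_anti x y : lleb x y -> lleb y x -> x = y.
Proof.
elim: x y => [|a x IH] [|b y] //=.
case/orP=> [H1|/andP[/eqP E1 H1]]; case/orP=> [H2|/andP[/eqP E2 H2]].
- by move: (ltn_trans H1 H2); rewrite ltnn.
- by move: H1; rewrite E2 ltnn.
- by move: H2; rewrite E1 ltnn.
- by rewrite E1 (IH _ H1 H2).
Qed.

Lemma lleb_rcons t s l : all (fun x => x < l) t ->
  lleb (rcons t l) (rcons s l) -> lleb t s.
Proof.
elim: t s => [|a t IH] [|b s] //=.
- case/andP=> Ha _; case: t {IH} => [|c t] /=; rewrite ?ltnn ?Ha ?orbF.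
    by case/orP=> [|/andP[/eqP E]]; [rewrite ltnNge ltnW|rewrite E ltnn in Ha].
  by rewrite andbF orbF ltnNge ltnW.
- case/andP=> _ Ht /orP [->//|/andP[-> /IH ->]] //; by rewrite orbT.
Qed.

Lemma leq_last_path d x : path leq d x -> d <= last d x.
Proof.
elim: x d => [|a x IH] d //= /andP[H1 H2].
exact: leq_trans H1 (IH _ H2).
Qed.

Lemma lleb_last s l x d1 d2 : d1 <= d2 -> path leq d2 x ->
  lleb s x -> lleb x (rcons s l) -> last d1 s <= last d2 x.
Proof.
elim: s x d1 d2 => [|b s IH] [|a x] d1 d2 //= Hd Hp.
- move=> _ _; case/andP: Hp => H1 H2.
  exact: leq_trans Hd (leq_trans H1 (leq_last_path H2)).
case/andP: Hp => _ Hp.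
case/orP=> [H1|/andP[/eqP E1 H1]]; case/orP=> [H2|/andP[/eqP E2 H2]].
- by move: (ltn_trans H1 H2); rewrite ltnn.
- by move: H1; rewrite E2 ltnn.
- by move: H2; rewrite E1 ltnn.
- by apply: IH => //; rewrite E1.
Qed.

Lemma max_exists (T : eqType) (R : T -> T -> Prop)
  (tot : forall x y, R x y \/ R y x) (tr : forall x y z, R x y -> R y z -> R x z)
  (l : seq T) (P : T -> Prop) :
  (forall x, P x -> x \in l) -> (exists x, P x) ->
  exists m, P m /\ forall x, P x -> R x m.
Proof.
have refl x : R x x by case: (tot x x).
elim: l P => [|a l IH] P Hl [x Px]; first by move: (Hl x Px).
case: (classic (exists y, P y /\ y <> a)) => [[y [Py ya]]|Hno].
- have H' : forall y, P y /\ y <> a -> y \in l.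
    move=> z [Pz za]; move: (Hl z Pz); rewrite in_cons.
    by case/orP=> // /eqP.
  have [m [[Pm ma] Hm]] := IH (fun y => P y /\ y <> a) H' (ex_intro _ y (conj Py ya)).
  case: (classic (P a)) => Pa.
  + case: (tot a m) => Ham.
    * exists m; split=> // z Pz; case: (classic (z = a)) => [->//|za].
      exact: Hm.
    * exists a; split=> // z Pz; case: (classic (z = a)) => [->//|za].
      exact: tr (Hm z (conj Pz za)) Ham.
  + exists m; split=> // z Pz; case: (classic (z = a)) => [E|za].
      by rewrite E in Pz.
    exact: Hm.
- have xa : x = a by apply: NNPP => xa; apply: Hno; exists x.
  exists a; split; first by rewrite -xa.
  move=> z Pz; have -> : z = a by apply: NNPP => za; apply: Hno; exists z.
  exact: refl.
Qed.

Fixpoint subseqs (s : seq nat) : seq (seq nat) :=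
  if s is x :: s' then [seq x :: t | t <- subseqs s'] ++ subseqs s' else [:: [::]].

Lemma nil_subseqs s : [::] \in subseqs s.
Proof. by elim: s => [|x s IH] //=; rewrite mem_cat IH orbT. Qed.

Lemma subseqsP s t : subseq t s -> t \in subseqs s.
Proof.
elim: s t => [|x s IH] [|y t] //=.
- by move=> _; rewrite mem_cat nil_subseqs orbT.
case: ifP => [/eqP -> /IH H|_ /IH H]; rewrite mem_cat.
  by rewrite (mem_map (fun a b => _)) ?H //; move=> u v [].
by rewrite H orbT.
Qed.

Lemma sorted_sub_iota n m s : sorted ltn s -> all (fun x => m <= x < m + n) s ->
  subseq s (iota m n).
Proof.
elim: n m s => [|n IH] m [|a s] //=.
- by rewrite addn0 => _; case/andP=> /andP[H1 H2]; move: (leq_ltn_trans H1 H2); rewrite ltnn.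
move=> Hs /andP[/andP[H1 H2] Ha].
have As : all (ltn a) s by apply: (order_path_min ltn_trans).
case: ifP => [/eqP E|/negbT E].
- apply: IH; first exact: path_sorted Hs.
  apply/allP=> y ys; have /andP[_ Hy] := allP Ha y ys; have Ay := allP As y ys.
  by apply/andP; split; [rewrite -E|rewrite addSnnS].
- apply: IH => //=.
  have Hma : m < a by rewrite ltn_neqAle eq_sym E H1.
  rewrite Hma addSnnS H2 /=.
  apply/allP=> y ys; have /andP[_ Hy] := allP Ha y ys; have Ay := allP As y ys.
  by apply/andP; split; [exact: ltn_trans Hma Ay|].
Qed.

Import GRing.Theory.

Section Ex.
Variable EC : exact_category.
Local Notation E := (@conflation EC).

Lemma Ekc (A B D : EC) (i : hom A B) (d : hom B D) : conflation i d -> kc_pair i d.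
Proof. exact: (ecat_exact EC).2.1. Qed.

Lemma E0 (A : EC) : adm_monic E (idm A).
Proof. exact: (ecat_exact EC).2.2.1. Qed.

Lemma E0op (A : EC) : adm_epic E (idm A).
Proof. exact: (ecat_exact EC).2.2.2.1. Qed.

Lemma E1 (A B D : EC) (f : hom A B) (g : hom B D) :
  adm_monic E f -> adm_monic E g -> adm_monic E (comp g f).
Proof. exact: (ecat_exact EC).2.2.2.2.1. Qed.

Lemma adm_mono (A B : EC) (f : hom A B) : adm_monic E f ->
  forall W (g1 g2 : hom W A), comp f g1 = comp f g2 -> g1 = g2.
Proof. by case=> D [d Hc]; have [Hk _] := Ekc Hc; exact: kernel_mono Hk. Qed.

Lemma zero_sub (X : EC) : exists (K : EC) (k : hom K X), is_zero K /\ adm_monic E k.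
Proof.
have [K [k Hc]] := E0op X.
have [[H0 Hu] _] := Ekc Hc.
have k0 : k = 0%R by rewrite -(comp1m k).
have [g [_ U]] := Hu K k H0.
have Kz : is_zero K.
  apply: idm_zero; rewrite -(U (idm K)) ?compm1 // (U 0%R) //.
  by rewrite comp0r k0.
by exists K, k; split=> //; exists X, (idm X).
Qed.

Lemma psub_from_zero (X : EC) : ~ is_zero X -> exists K : EC, is_zero K /\ psubE K X.
Proof.
move=> nX; have [K [k [Kz Hk]]] := zero_sub X.
exists K; split=> //; exists k; split=> // [[g [_ H2]]].
apply: nX; apply: idm_zero; rewrite -H2 ((Kz X).1 k); exact: comp0l.
Qed.

Lemma zchain_ex (X : EC) : exists n, zchain n X.
Proof.
case: (classic (is_zero X)) => [Xz|nX]; first by exists 0%N; constructor.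
have [K [Kz HK]] := psub_from_zero nX.
by exists 1%N; apply: (zchainS (zchain0 Kz)).
Qed.

Lemma nat_max (P : nat -> Prop) N n0 : P n0 -> (forall m, P m -> (m <= N)%N) ->
  exists n, P n /\ forall m, P m -> (m <= n)%N.
Proof.
move=> Pn0 HN.
suff: forall k n, P n -> (N - n <= k)%N -> exists n, P n /\ forall m, P m -> (m <= n)%N.
  by move/(_ (N - n0)%N n0 Pn0 (leqnn _)).
elim=> [|k IH] n Pn Hk.
  exists n; split=> // m Pm; have := HN m Pm; lia.
case: (classic (exists m, P m /\ (n < m)%N)) => [[m [Pm nm]]|Hno].
  apply: (IH m Pm); have := HN m Pm; lia.
exists n; split=> // m Pm; rewrite leqNgt; apply/negP=> nm; apply: Hno; by exists m.
Qed.


Lemma zchain_nonzero n (X : EC) : zchain n.+1 X -> ~ is_zero X.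
Proof.
move=> H; inversion H; subst => Xz.
case: H2 => i [Hi Hni]; apply: Hni.
have X'z : is_zero X'.
  apply: idm_zero; apply: (adm_mono Hi).
  by rewrite ((Xz X').2 (comp i _)) ((Xz X').2 (comp i 0%R)).
exact: zero_iso.
Qed.

Lemma psub_comp (S W Z : EC) (f : hom S W) (g : hom W Z) :
  adm_monic (@conflation EC) f -> adm_monic (@conflation EC) g -> ~ is_iso g -> psubE S Z.
Proof.
move=> Hf Hg Hng; exists (comp g f); split; first exact: E1.
by move=> Hi; apply: Hng; apply: (mono_iso_right (adm_mono Hg) Hi).
Qed.

Lemma split_adm (W A B : EC) (i1 : hom A W) (i2 : hom B W) (p1 : hom W A) (p2 : hom W B) :
  comp p1 i1 = idm A -> comp p2 i2 = idm B -> comp p1 i2 = 0%R ->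
  comp p2 i1 = 0%R -> (comp i1 p1 + comp i2 p2)%R = idm W ->
  adm_monic (@conflation EC) i1.
Proof.
move=> h1 h2 h3 h4 h5.
have [K [k [Kz Hk]]] := zero_sub B.
have [B' [i' [f' [[Hc Hu] Hi']]]] := (ecat_exact EC).2.2.2.2.2.2.1 _ _ _ k (0%R : hom K A) Hk.
have Huv : comp i1 (0%R : hom K A) = comp i2 k.
  by rewrite ((Kz W).1 (comp i1 _)) ((Kz W).1 (comp i2 _)).
have [h [[hi hf] _]] := Hu W i1 i2 Huv.
set g := (comp i' p1 + comp f' p2)%R.
have gh : comp g h = idm B'.
  have [u [_ U]] := Hu B' i' f' Hc.
  rewrite -(U (idm B')) ?comp1m //.
  apply/esym/U; split.
    rewrite -compA hi /g compDl -!compA h4 h1 comp0r compm1; exact: addr0.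
  rewrite -compA hf /g compDl -!compA h3 h2 comp0r compm1; exact: add0r.
have hg : comp h g = idm W.
  by rewrite /g compDr !compA hi hf.
case: Hi' => D [d Hcd].
exists D, (comp d g).
apply: ((ecat_exact EC).1 _ _ _ _ _ _ _ _ _ _ (idm A) h (idm D) Hcd).
- by exists (idm A); rewrite comp1m.
- by exists g.
- by exists (idm D); rewrite comp1m.
- by rewrite compm1 hi.
- by rewrite -compA gh compm1 comp1m.
Qed.

Variable Hfin : finite_exact EC.

Lemma lE_spec (X : EC) : zchain (lE X) X /\ forall m, zchain m X -> (m <= lE X)%N.
Proof.
have [N HN] := Hfin X; have [n0 Hn0] := zchain_ex X.
exact: (epsilon_spec (inhabits 0%N) _ (nat_max Hn0 HN)).
Qed.

Lemma lE_lt (A B : EC) : psubE A B -> (lE A < lE B)%N.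
Proof.
move=> H; apply: (lE_spec B).2; exact: (zchainS (lE_spec A).1 H).
Qed.

Lemma lE_pos (X : EC) : ~ is_zero X -> (0 < lE X)%N.
Proof.
move=> nX; have [K [Kz HK]] := psub_from_zero nX.
apply: (lE_spec X).2; exact: (zchainS (zchain0 Kz) HK).
Qed.


Lemma has_indec_sub_aux n : forall W : EC, (lE W <= n)%N -> ~ is_zero W ->
  exists (S : EC) (f : hom S W), indecomposable S /\ adm_monic (@conflation EC) f.
Proof.
elim: n => [|n IH] W Hn nW.
  by move: (lE_pos nW); rewrite ltnNge Hn.
case: (classic (indecomposable W)) => [Wi|Wni].
  by exists W, (idm W); split=> //; exact: E0.
have [A [B [Hb [nA nB]]]] : exists A B : EC, is_biproduct W A B /\ ~ is_zero A /\ ~ is_zero B.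
  apply: NNPP => Hno; apply: Wni; split=> // A B Hb; apply: NNPP => Hab.
  by apply: Hno; exists A, B; split=> //; split=> H; apply: Hab; [left|right].
have Hb' := Hb.
case: Hb' => i1 [i2 [p1 [p2 [h1 h2 h3 h4 h5]]]].
have Ha := split_adm h1 h2 h3 h4 h5.
have Hp : psubE A W.
  exists i1; split=> // [[q [Hq1 Hq2]]]; apply: nB; apply: idm_zero.
  have p20 : p2 = 0%R by rewrite -(compm1 p2) -Hq2 compA h4 comp0l.
  by rewrite -h2 p20 comp0l.
have := lE_lt Hp => Hlt.
have [S [f [Si Hf]]] := IH A (leq_trans (ltnSE (leq_trans Hlt Hn)) (leqnn _)) nA.
by exists S, (comp i1 f); split=> //; exact: E1.
Qed.

Lemma len2_sub (Z : EC) : (1 < lE Z)%N -> exists S : EC, indecomposable S /\ psubE S Z.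
Proof.
move=> H; have [Hz _] := lE_spec Z.
move: Hz; case E: (lE Z) H => [|[|n]] // _ Hz.
inversion Hz; subst.
have nX' := zchain_nonzero H0.
have [S [f [Si Hf]]] := has_indec_sub_aux (leqnn _) nX'.
case: H1 => g [Hg Hng].
by exists S; split=> //; exact: psub_comp Hf Hg Hng.
Qed.


Lemma grchain_nil s (X : EC) : grchain s X -> s <> [::].
Proof. by case=> // s' X' X'' _ _ _; case: s'. Qed.

Lemma G1 s (X : EC) : grchain s X ->
  [/\ s <> [::], last 0%N s = lE X, sorted ltn s,
      all (fun x => (x <= lE X)%N) s & indecomposable X].
Proof.
elim=> [Y Yi|s' X' Y Hg [Hne Hl Hs Ha Hi'] Yi Hp] /=.
  by split=> //; rewrite leqnn.
have Hlt := lE_lt Hp.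
split=> //.
- by case: (s').
- by rewrite last_rcons.
- clear Hg Ha; case: s' Hne Hl Hs => [//|a s'] _ /= Hl Hs.
  by rewrite rcons_path Hs Hl.
- rewrite all_rcons leqnn /=; apply/allP=> y ys.
  by have := allP Ha y ys => /leq_trans /(_ (ltnW Hlt)).
Qed.

Lemma G2 s (Z : EC) : grchain s Z -> exists W : EC,
  [/\ indecomposable W, head 0%N s = lE W &
      forall S, indecomposable S -> psubE S W -> grchain (lE S :: s) Z].
Proof.
elim=> [Y Yi|s' X' Y Hg [W [Wi Hh HS]] Yi Hp].
  exists Y; split=> // S Si Sp.
  exact: (grchainS (grchain1 Si) Yi Sp).
exists W; split=> //.
  by move: (grchain_nil Hg) Hh; case: (s').
move=> S Si Sp; exact: (grchainS (HS S Si Sp) Yi Hp).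
Qed.

Lemma muE_spec (X : EC) : indecomposable X ->
  grchain (muE X) X /\ forall t, grchain t X -> lll t (muE X).
Proof.
move=> Xi.
have H : exists s, grchain s X /\ forall t, grchain t X -> lll t s.
  apply: (@max_exists _ (@lll) _ _ (subseqs (iota 0 (lE X).+1))).
  - by move=> x y; case/orP: (lleb_total x y) => /lllP; [left|right].
  - by move=> x y z /lllP H1 /lllP H2; apply/lllP; exact: lleb_trans H1 H2.
  - move=> t Ht; have [_ _ Hs Ha _] := G1 Ht.
    apply: subseqsP; apply: sorted_sub_iota => //.
  - by exists [:: lE X]; constructor.
exact: (epsilon_spec (inhabits [::]) _ H).
Qed.

Lemma max_char s (Y : EC) : grchain s Y -> (forall t, grchain t Y -> lll t s) ->
  muE Y = s.
Proof.
move=> Hg Hm; have [_ _ _ _ Yi] := G1 Hg.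
have [Hg' Hm'] := muE_spec Yi.
apply: lleb_anti; apply/lllP; [exact: Hm|exact: Hm'].
Qed.

Lemma head_le1 (X : EC) : indecomposable X -> (head 0%N (muE X) <= 1)%N.
Proof.
move=> Xi; have [Hg Hm] := muE_spec Xi.
have [W [Wi Hh HS]] := G2 Hg.
rewrite Hh leqNgt; apply/negP => H.
have [S [Si Sp]] := len2_sub H.
have /lllP := Hm _ (HS S Si Sp).
have Hlt := lE_lt Sp.
move: (grchain_nil Hg) Hh; case: (muE X) => [//|a x] _ /= Ha.
by rewrite Ha ltnNge (ltnW Hlt) /= (ltn_eqF Hlt).
Qed.


Lemma main s (Ytop : EC) : grchain s Ytop -> (forall t, grchain t Ytop -> lll t s) ->
  forall X : EC, indecomposable X -> lll (muE X) s -> muE X <> s ->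
  exists Y' Y'' : EC,
    [/\ indecomposable Y', indecomposable Y'', psubE Y' Y'', subE Y'' Ytop &
     [/\ GR_predecessor Y' Y'', lll (muE Y') (muE X),
         lll (muE X) (muE Y''), muE X <> muE Y'' & (lE Y' <= lE X)%N]].
Proof.
elim=> [Y Yi|s' Yp Y Hg IH Yi Hp] Hmax X Xi Hxs Hne.
  have [HgX _] := muE_spec Xi.
  have h1 := head_le1 Xi.
  have Ypos := lE_pos Yi.1.
  move/lllP: Hxs; move: (grchain_nil HgX) h1 Hne.
  case: (muE X) => [//|a x] _ /= ha Hne.
  case/orP=> [H|/andP[/eqP E Hx]].
    by move: (leq_ltn_trans Ypos (leq_trans H ha)); rewrite ltnn.
  by case: x Hx Hne => // _; rewrite E.
have [_ Hlp _ Hap Ypi] := G1 Hg.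
have HltY := lE_lt Hp.
have Hmax' : forall t, grchain t Yp -> lll t s'.
  move=> t Ht; have [_ _ _ Hat _] := G1 Ht.
  have /lllP H := Hmax _ (grchainS Ht Yi Hp).
  apply/lllP; apply: lleb_rcons H.
  by apply/allP=> y ys; exact: leq_ltn_trans (allP Hat y ys) HltY.
have Mp : muE Yp = s' := max_char Hg Hmax'.
have My : muE Y = rcons s' (lE Y) := max_char (grchainS Hg Yi Hp) Hmax.
have GR : GR_predecessor Yp Y.
  split=> // Y0 Y0i Y0p; rewrite Mp.
  have [Hg0 _] := muE_spec Y0i.
  have [_ _ _ Ha0 _] := G1 Hg0.
  have /lllP H := Hmax _ (grchainS Hg0 Yi Y0p).
  apply/lllP; apply: lleb_rcons H.
  have Hl0 := lE_lt Y0p.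
  apply/allP=> y ys; apply: leq_ltn_trans (allP Ha0 y ys) _.
  exact: Hl0.
case: (classic (lleb (muE X) s' /\ muE X <> s')) => [[H1 H2]|Hn].
  have [Y' [Y'' [h1 h2 h3 [f Hf] h5]]] := IH Hmax' X Xi (proj2 (lllP _ _) H1) H2.
  case: Hp => g [Hgm _].
  exists Y', Y''; split=> //; exists (comp g f); exact: E1.
have Hsx : lleb s' (muE X).
  case/orP: (lleb_total (muE X) s') => // H.
  have -> : muE X = s' by apply: NNPP => H'; apply: Hn.
  exact: lleb_refl.
have [HgX _] := muE_spec Xi.
have [_ HlX HsX _ _] := G1 HgX.
exists Yp, Y; split=> //.
  by exists (idm Y); exact: E0.
split=> //.
- by rewrite Mp; apply/lllP.
- by rewrite My.
- by rewrite My.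
rewrite -Hlp -HlX; apply: (lleb_last (l := lE Y)) => //.
- move: HsX (grchain_nil HgX); case: (muE X) => [//|a x] /= Hs _.
  by apply: (sub_path (@ltnW)) Hs.
- by apply/lllP.
Qed.

End Ex.

Theorem proposition7p12 (EC : exact_category) (Hfin : finite_exact EC) (X Y : EC) :
  indecomposable X -> indecomposable Y ->
  lll (muE X) (muE Y) -> muE X <> muE Y ->
  exists Y' Y'' : EC,
    [/\ indecomposable Y', indecomposable Y'', psubE Y' Y'', subE Y'' Y &
     [/\ GR_predecessor Y' Y'', lll (muE Y') (muE X),
         lll (muE X) (muE Y''), muE X <> muE Y'' & (lE Y' <= lE X)%N]].
Proof.
move=> Xi Yi Hxs Hne.
have [Hg Hm] := muE_spec Hfin Yi.
exact: (main Hfin Hg Hm Xi Hxs Hne).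
Qed.
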